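(* Let $\mathcal G$ be a directed acyclic graph and $W$ a subset of its vertex set such that the induced subgraph $\mathcal G|_W$ is connected. The following are equivalent: (a) $\mathcal G|_W$ is path-induced; (b) $\mathcal G/(\mathcal G|_W)$ is acyclic; (c) there is a topological sort of $\mathcal G$ in which the vertices of $W$ are consecutive. Moreover, under any of these equivalent conditions, there is a bijection between topological sorts of $\mathcal G$ in which the vertices of $W$ are consecutive and pairs consisting of a topological sort of $\mathcal G|_W$ and a topological sort of $\mathcal G/(\mathcal G|_W)$.
   Context: The induced subgraph $\mathcal G|_W$ has vertex set $W$ and all edges of $\mathcal G$ between vertices of $W$. It is path-induced if for all $x,y\in W$, every path from $x$ to $y$ in $\mathcal G$ is contained in $\mathcal G|_W$. The contraction $\mathcal G/(\mathcal G|_W)$ (for connected $\mathcal G|_W$) is the graph minor obtained by contracting every edge of $\mathcal G|_W$: its vertex set is $(\text{vertices of }\mathcal G\setminus W)+\{x_W\}$; for $x,y\ne x_W$ its edges $x\to y$ are those of $\mathcal G$; there is an edge $x_W\to y$ for each $z\in W$ and edge $z\to y$ of $\mathcal G$; an edge $x\to x_W$ for each $z\in W$ and edge $x\to z$ of $\mathcal G$; and no edges from $x_W$ to $x_W$. Connectedness is weak (underlying undirected graph). *)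

(* Defs.v *)
From mathcomp Require Import all_boot.
Set Implicit Arguments. Unset Strict Implicit. Unset Printing Implicit Defensive.

Definition acyclic (V : Type) (E : rel V) : Prop :=
  forall x p, path E x p -> last x p = x -> p = [::].

Definition undir_in (T : finType) (E : rel T) (W : {set T}) : rel T :=
  fun x y => [&& x \in W, y \in W & E x y || E y x].

Definition weakly_connected_induced (T : finType) (E : rel T) (W : {set T}) : Prop :=
  W != set0 /\ forall x y, x \in W -> y \in W -> connect (undir_in E W) x y.

Definition path_induced (T : finType) (E : rel T) (W : {set T}) : Prop :=
  forall x p, x \in W -> last x p \in W -> path E x p -> all (mem W) (x :: p).

Definition induced_vtx (T : finType) (W : {set T}) := {x : T | x \in W}.
Definition induced_rel (T : finType) (E : rel T) (W : {set T})
  : rel (induced_vtx W) := fun x y => E (val x) (val y).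

(* Vertex type of the contraction G/(G|_W): vertices outside W, plus
   None standing for the contracted vertex x_W. *)
Definition contr_vtx (T : finType) (W : {set T}) := option {x : T | x \notin W}.
Definition contr_rel (T : finType) (E : rel T) (W : {set T})
  : rel (contr_vtx W) := fun u v =>
  match u, v with
  | Some x, Some y => E (val x) (val y)
  | None, Some y => [exists z in W, E z (val y)]
  | Some x, None => [exists z in W, E (val x) z]
  | None, None => false
  end.

Definition topsort (V : finType) (E : rel V) (s : seq V) : Prop :=
  perm_eq s (enum V) /\ forall x y, E x y -> index x s < index y s.

Definition consecutive (T : finType) (W : {set T}) (s : seq T) : Prop :=
  forall x y z, x \in W -> z \in W ->
    index x s <= index y s -> index y s <= index z s -> y \in W.

Arguments induced_rel {T} E W.
Arguments contr_rel {T} E W.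
Arguments consecutive {T} W s.

(* Main.v *)
Require Import Defs.
From mathcomp Require Import all_boot zify.
From Stdlib Require Import ProofIrrelevance.
Set Implicit Arguments. Unset Strict Implicit. Unset Printing Implicit Defensive.

Lemma key_sort (V : finType) (k : V -> nat) :
  let s := sort (fun x y => k x <= k y) (enum V) in
  perm_eq s (enum V) /\ forall x y, index x s <= index y s -> k x <= k y.
Proof.
move=> s; split; first by rewrite /s perm_sort perm_refl.
move=> x y hxy.
have mx : x \in s by rewrite /s mem_sort mem_enum.
have my : y \in s by rewrite /s mem_sort mem_enum.
have hs : sorted (fun x y => k x <= k y) s.
  by apply: sort_sorted => a b; apply: leq_total.
have := @sorted_leq_nth _ (fun x y => k x <= k y) _ _ x s hs (index x s) (index y s).
rewrite !inE !index_mem !nth_index //; apply => //.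
by move=> a b c h1 h2; apply: leq_trans h1 h2.
Qed.

Lemma acyc_conn (V : finType) (e : rel V) x y :
  acyclic e -> e x y -> ~~ connect e y x.
Proof.
move=> ac exy; apply/negP => /connectP [p hp hl].
have := ac y (rcons p y); rewrite rcons_path hp -hl exy last_rcons.
by move=> /(_ erefl erefl); case: p {hp hl}.
Qed.

Lemma topsort_exists (V : finType) (e : rel V) : acyclic e -> exists s, topsort e s.
Proof.
move=> ac.
pose k x := #|[set z | connect e z x]|.
have hk : forall x y, e x y -> k x < k y.
  move=> x y exy; apply: proper_card; apply/properP; split.
    apply/subsetP => z; rewrite !inE => hz; apply: connect_trans hz _.
    exact: connect1.
  exists y; first by rewrite inE connect0.
  by rewrite inE; apply: acyc_conn.
have [hp hi] := key_sort k.
eexists; split; first exact: hp.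
move=> x y exy; rewrite ltnNge; apply/negP => /hi.
by rewrite leqNgt hk.
Qed.

Lemma topsort_idx (V : finType) (e : rel V) s x p :
  topsort e s -> path e x p -> p != [::] -> index x s < index (last x p) s.
Proof.
move=> [_ hs]; elim: p x => [//|y p IH] x /= /andP [exy hp] _.
case: p IH hp => [|z p] IH hp; first exact: hs.
apply: ltn_trans (hs _ _ exy) _; exact: IH.
Qed.

Lemma topsort_acyclic (V : finType) (e : rel V) s : topsort e s -> acyclic e.
Proof.
move=> ts x p hp hl; apply/eqP/negPn/negP => hn.
by have := topsort_idx ts hp hn; rewrite hl ltnn.
Qed.

Ltac natify :=
  repeat match goal with
  | H : is_true (leq _ _) |- _ => revert H
  | H : @eq nat _ _ |- _ => revert H
  end;
  repeat match goal with
  | |- context [size ?s] => let n := fresh "n" in set n := size s; clearbody n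
  | |- context [index ?x ?s] => let n := fresh "n" in set n := index x s; clearbody n
  end; intros; lia.

Lemma all_take_find (X : Type) (a : pred X) s : all (fun x => ~~ a x) (take (find a s) s).
Proof. by elim: s => //= x s IH; case h: (a x) => //=; rewrite h IH. Qed.

Lemma drop_find (X : Type) (a : pred X) s :
  match drop (find a s) s with [::] => True | y :: _ => a y end.
Proof. by elim: s => //= x s IH; case h: (a x) => //=; rewrite h. Qed.

Lemma all_sub (X : Type) (P : pred X) (sT : subType P) (s : seq X) :
  all P s -> exists s' : seq sT, s = map val s'.
Proof.
elim: s => [|x s IH] /=; first by exists [::].
case/andP => hx /IH [s' ->]; by exists (Sub x hx :: s'); rewrite /= SubK.
Qed.

Lemma perm_enumP (V : finType) (s : seq V) :
  perm_eq s (enum V) <-> uniq s /\ forall x, x \in s.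
Proof.
split.
  move=> h; split; first by rewrite (perm_uniq h) enum_uniq.
  by move=> x; rewrite (perm_mem h) mem_enum.
move=> [hu hm]; apply: uniq_perm => //; first exact: enum_uniq.
by move=> x; rewrite hm mem_enum.
Qed.

Section S.
Variables (T : finType) (E : rel T) (W : {set T}).
Notation IV := (induced_vtx W).
Notation CV := (contr_vtx W).
Notation OV := ({x : T | x \notin W}).

Definition build (a : seq OV) (si : seq IV) (b : seq OV) : seq T :=
  map val a ++ map val si ++ map val b.
Definition cshape (a b : seq OV) : seq CV := map Some a ++ None :: map Some b.

Lemma memA (a : seq OV) u : u \in map val a -> u \notin W.
Proof. by case/mapP => y _ ->; exact: (valP y). Qed.
Lemma memI (a : seq IV) u : u \in map val a -> u \in W.
Proof. by case/mapP => y _ ->; exact: (valP y). Qed.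

Lemma pos_a a si b (y : OV) : y \in a -> index (val y) (build a si b) = index y a.
Proof.
by move=> h; rewrite /build index_cat (mem_map val_inj) h (index_map val_inj).
Qed.

Lemma pos_i a si b (z : IV) : z \in si ->
  index (val z) (build a si b) = size a + index z si.
Proof.
move=> h; rewrite /build index_cat.
have -> : (val z \in map val a) = false.
  by apply/negP => /memA; rewrite (valP z).
by rewrite size_map index_cat (mem_map val_inj) h (index_map val_inj).
Qed.

Lemma pos_b a si b (y : OV) : y \in b -> y \notin a ->
  index (val y) (build a si b) = size a + size si + index y b.
Proof.
move=> hb ha; rewrite /build index_cat (mem_map val_inj) (negbTE ha) index_cat.
have -> : (val y \in map val si) = false.
  by apply/negP => /memI; rewrite (negbTE (valP y)).
by rewrite !size_map (index_map val_inj) addnA.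
Qed.

Lemma cpos_N a b : index None (cshape a b) = size a.
Proof.
rewrite /cshape index_cat.
have -> : (None \in map Some a) = false by apply/negP => /mapP [].
by rewrite size_map /= addn0.
Qed.

Lemma cpos_a a b (y : OV) : y \in a -> index (Some y) (cshape a b) = index y a.
Proof.
by move=> h; rewrite /cshape index_cat (mem_map (@Some_inj _)) h (index_map (@Some_inj _)).
Qed.

Lemma cpos_b a b (y : OV) : y \in b -> y \notin a ->
  index (Some y) (cshape a b) = size a + 1 + index y b.
Proof.
move=> hb ha; rewrite /cshape index_cat (mem_map (@Some_inj _)) (negbTE ha) /=.
by rewrite size_map (index_map (@Some_inj _)) addn1 addSn addnS.
Qed.

Lemma build_perm a si b : perm_eq (build a si b) (map val si ++ map val (a ++ b)).
Proof. by rewrite /build perm_catCA map_cat perm_cat2l perm_refl. Qed.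
Lemma cshape_perm a b : perm_eq (cshape a b) (None :: map Some (a ++ b)).
Proof.
by rewrite /cshape -cat1s perm_catCA map_cat cat1s perm_refl.
Qed.

Lemma uniq_build a si b :
  uniq (build a si b) = uniq si && uniq (a ++ b).
Proof.
rewrite (perm_uniq (build_perm a si b)) cat_uniq !(map_inj_uniq val_inj).
case: (uniq si) => //=; case: (uniq (a ++ b)); rewrite ?andbF ?andbT //.
apply/hasPn => u /memA hu; apply/negP => /memI; by rewrite (negbTE hu).
Qed.

Lemma uniq_cshape a b : uniq (cshape a b) = uniq (a ++ b).
Proof.
rewrite (perm_uniq (cshape_perm a b)) /= (map_inj_uniq (@Some_inj _)).
by have -> : (None \in map Some (a ++ b)) = false by apply/negP => /mapP [].
Qed.

Lemma mem_build_i a si b (z : IV) : (val z \in build a si b) = (z \in si).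
Proof.
rewrite (perm_mem (build_perm a si b)) mem_cat (mem_map val_inj).
have -> : (val z \in map val (a ++ b)) = false by apply/negP => /memA; rewrite (valP z).
by rewrite orbF.
Qed.

Lemma mem_build_o a si b (y : OV) : (val y \in build a si b) = (y \in a ++ b).
Proof.
rewrite (perm_mem (build_perm a si b)) mem_cat (mem_map val_inj).
by have -> : (val y \in map val si) = false by apply/negP => /memI; rewrite (negbTE (valP y)).
Qed.

Lemma classT (x : T) : (exists z : IV, x = val z) \/ (exists y : OV, x = val y).
Proof.
case: (boolP (x \in W)) => hx; [left; exists (Sub x hx) | right; exists (Sub x hx)];
  by rewrite SubK.
Qed.

Lemma decomp (s : seq T) : uniq s -> consecutive W s ->
  exists a si b, s = build a si b.
Proof.
move=> hu hc.
pose k := find (mem W) s; pose A := take k s; pose R := drop k s.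
pose m := find (predC (mem W)) R; pose I := take m R; pose B := drop m R.
have eS : s = A ++ I ++ B by rewrite /I /B cat_take_drop /A /R cat_take_drop.
have hA : all (predC (mem W)) A by exact: all_take_find.
have hI : all (mem W) I.
  apply: sub_all (all_take_find _ _) => u /=; by rewrite negbK.
have hB : all (predC (mem W)) B.
  have dR := drop_find (mem W) s; have dB := drop_find (predC (mem W)) R.
  rewrite -/B in dB; rewrite -/k -/R in dR.
  case eB : B dB => [//|y0 B'] hy0; rewrite -eB; simpl in hy0.
  apply/allP => y hy /=; apply/negP => hyW.
  have eR : R = I ++ B by rewrite /I /B cat_take_drop.
  case eI : I eR hI => [|x I'] eR hI'.
    move: dR; rewrite eR eB /= => hh; by rewrite hh in hy0.
  have hxW : x \in W by move: hI' => /= /andP [].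
  have xA : x \notin A by apply/negP => hh; move/allP: hA => /(_ _ hh) /=; rewrite hxW.
  have y0A : y0 \notin A.
    move: hu; rewrite eS cat_uniq => /and3P [_ /hasPn hh _].
    by apply: hh; rewrite mem_cat eB mem_head orbT.
  have y0I : y0 \notin I by rewrite eI; apply/negP => hh; move/allP: hI' => /(_ _ hh) /=; rewrite (negbTE hy0).
  have yA : y \notin A by apply/negP => hh; move/allP: hA => /(_ _ hh) /=; rewrite hyW.
  have yI : y \notin I.
    move: hu; rewrite eS !cat_uniq => /and3P [_ _] /and3P [_ /hasPn hh _].
    by apply: hh.
  have i1 : index x s = size A by rewrite eS index_cat (negbTE xA) eI /= eqxx addn0.
  have i2 : index y0 s = size A + size I by rewrite eS index_cat (negbTE y0A) index_cat (negbTE y0I) eB /= eqxx addn0.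
  have i3 : size A + size I <= index y s by rewrite eS index_cat (negbTE yA) index_cat (negbTE yI) addnA leq_addr.
  have := hc x y0 y hxW hyW; rewrite i1 i2 => /(_ (leq_addr _ _) i3).
  by rewrite (negbTE hy0).
have [a ea] : exists a : seq OV, A = map val a by apply: all_sub.
have [b eb] : exists b : seq OV, B = map val b by apply: all_sub.
have [si ei] : exists si : seq IV, I = map val si by apply: all_sub.
by exists a, si, b; rewrite eS ea eb ei.
Qed.

Lemma idx_lt (X : eqType) (x : X) s : x \in s -> index x s < size s.
Proof. by rewrite index_mem. Qed.

Lemma cls_lem a si b : (forall y : OV, y \in a ++ b) -> forall y : OV,
  (index (val y) (build a si b) = index y a /\ index (Some y) (cshape a b) = index y a
    /\ index y a < size a) \/
  (index (val y) (build a si b) = size a + size si + index y b /\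
   index (Some y) (cshape a b) = size a + 1 + index y b).
Proof.
move=> mab y; case: (boolP (y \in a)) => ha.
  by left; rewrite pos_a // cpos_a // idx_lt.
have hb : y \in b by move: (mab y); rewrite mem_cat (negbTE ha).
by right; rewrite pos_b // cpos_b.
Qed.

Lemma ci_lem a si b : (forall z : IV, z \in si) -> forall z : IV,
  index (val z) (build a si b) = size a + index z si /\ index z si < size si.
Proof. by move=> msi z; rewrite pos_i // idx_lt. Qed.

Lemma comps a si b : topsort E (build a si b) ->
  topsort (induced_rel E W) si /\ topsort (contr_rel E W) (cshape a b).
Proof.
case=> /perm_enumP [hu hm] hs.
move: hu; rewrite uniq_build => /andP [usi uab].
have msi : forall z : IV, z \in si by move=> z; rewrite -(mem_build_i a si b).
have mab : forall y : OV, y \in a ++ b by move=> y; rewrite -(mem_build_o a si b).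
have cls := cls_lem si mab; have ci := ci_lem a b msi.
split.
  split; first by apply/perm_enumP; split.
  move=> x y exy; have := hs _ _ exy; rewrite !pos_i // ltn_add2l //.
split.
  apply/perm_enumP; split; first by rewrite uniq_cshape.
  case=> [y|]; last by rewrite /cshape mem_cat inE eqxx orbT.
  by rewrite /cshape mem_cat inE /= !(mem_map (@Some_inj _)) -mem_cat.
case=> [x|] [y|] //= h; rewrite ?cpos_N.
- have := hs (val x) (val y) h.
  case: (cls x) => [[h1 [h2 h3]]|[h1 h2]]; case: (cls y) => [[h4 [h5 h6]]|[h4 h5]]; rewrite h1 h2 h4 h5; natify.
- case/existsP: h => z /andP [hz exz].
  have [e1 e2] := ci (Sub z hz : IV).
  have := hs (val x) (val (Sub z hz : IV)) exz.
  rewrite e1; case: (cls x) => [[h1 [h2 h3]]|[h1 h2]]; rewrite h1 h2; natify.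
- case/existsP: h => z /andP [hz ezy].
  have [e1 e2] := ci (Sub z hz : IV).
  have := hs (val (Sub z hz : IV)) (val y) ezy.
  rewrite e1; case: (cls y) => [[h1 [h2 h3]]|[h1 h2]]; rewrite h1 h2; natify.
Qed.

Lemma wf_build a si b :
  topsort (induced_rel E W) si -> topsort (contr_rel E W) (cshape a b) ->
  topsort E (build a si b) /\ consecutive W (build a si b).
Proof.
case=> /perm_enumP [usi msi] hsi [/perm_enumP [uc mc] hc].
rewrite uniq_cshape in uc.
have mab : forall y : OV, y \in a ++ b.
  move=> y; move: (mc (Some y)).
  by rewrite /cshape mem_cat inE /= !(mem_map (@Some_inj _)) -mem_cat.
have cls := cls_lem si mab; have ci := ci_lem a b msi.
split.
  split.
    apply/perm_enumP; split; first by rewrite uniq_build usi uc.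
    by move=> x; case: (classT x) => [[z ->]|[y ->]]; rewrite ?mem_build_i ?mem_build_o.
  move=> x y; case: (classT x) => [[x' ->]|[x' ->]]; case: (classT y) => [[y' ->]|[y' ->]] h.
  - by have := hsi _ _ h; rewrite !pos_i // ltn_add2l.
  - have h' : contr_rel E W None (Some y').
      by apply/existsP; exists (val x'); rewrite (valP x') h.
    have := hc _ _ h'; rewrite cpos_N; have [e1 e2] := ci x'.
    rewrite e1; case: (cls y') => [[h1 [h2 h3]]|[h1 h2]]; rewrite h1 h2; natify.
  - have h' : contr_rel E W (Some x') None.
      by apply/existsP; exists (val y'); rewrite (valP y') h.
    have := hc _ _ h'; rewrite cpos_N; have [e1 e2] := ci y'.
    rewrite e1; case: (cls x') => [[h1 [h2 h3]]|[h1 h2]]; rewrite h1 h2; natify.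
  - have h' : contr_rel E W (Some x') (Some y') by [].
    have := hc _ _ h'.
    case: (cls x') => [[h1 [h2 h3]]|[h1 h2]]; case: (cls y') => [[h4 [h5 h6]]|[h4 h5]];
    rewrite h1 h2 h4 h5; natify.
move=> x y z hx hz.
have -> : x = val (Sub x hx : IV) by rewrite SubK.
have -> : z = val (Sub z hz : IV) by rewrite SubK.
have [e1 e2] := ci (Sub x hx : IV); have [e3 e4] := ci (Sub z hz : IV).
rewrite e1 e3.
case: (classT y) => [[y' ->]|[y' ->]]; first by rewrite (valP y').
case: (cls y') => [[h1 [h2 h3]]|[h1 h2]]; rewrite h1; natify.
Qed.

Definition liftd (d : T) (u : CV) : T := if u is Some y then val y else d.

Lemma to_None p (x : OV) : path (contr_rel E W) (Some x) p -> None \in p ->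
  exists2 z, z \in W & connect E (val x) z.
Proof.
elim: p x => //= v p IH x /andP [hxv hp]; rewrite in_cons.
case: v hxv hp => [y|] hxv hp /= hN.
  have [z hz hc] := IH y hp hN; exists z => //.
  by apply: connect_trans hc; apply: connect1.
by case/existsP: hxv => z /andP [hz h]; exists z => //; apply: connect1.
Qed.

Lemma lift_path p d u : path (contr_rel E W) u p -> None \notin u :: p ->
  path E (liftd d u) (map (liftd d) p).
Proof.
elim: p u => //= v p IH u /andP [huv hp]; rewrite in_cons negb_or => /andP [hu hn].
case: u hu huv => // x _ huv; move: hn; rewrite in_cons negb_or => /andP [hv hn'].
case: v hv huv hp hn' => // y _ huv hp hn' /=.
apply/andP; split; first exact: huv.
by apply: (IH (Some y) hp); rewrite in_cons negb_or hn'.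
Qed.

Lemma no_None_conn p (x v : OV) : path (contr_rel E W) (Some x) p -> None \notin p ->
  last (Some x) p = Some v -> connect E (val x) (val v).
Proof.
move=> hp hn hl; apply/connectP; exists (map (liftd (val x)) p).
  by apply: (lift_path (val x) hp); rewrite in_cons negb_or hn.
by rewrite (last_map (liftd (val x)) p (Some x)) hl.
Qed.

Lemma from_None p u (v : OV) : path (contr_rel E W) u p -> last u p = Some v ->
  (u == None) || (None \in p) -> exists2 z, z \in W & connect E z (val v).
Proof.
elim: p u => [|w p IH] u /=.
  by move=> _ ->.
move=> /andP [huw hp] hl hN.
case: (boolP ((w == None) || (None \in p))) => h; first exact: (IH w hp hl h).
move: h; rewrite negb_or => /andP [hw hnp].
have hw' : (None == w) = false by rewrite eq_sym (negbTE hw).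
move: hN; rewrite in_cons (negbTE hnp) orbF hw' orbF => /eqP hu; subst u.
clear hw'; case: w hw huw hp hl => // w' _ huw hp hl.
case/existsP: huw => z /andP [hz ezw]; exists z => //.
apply: connect_trans (connect1 ezw) _; exact: no_None_conn hp hnp hl.
Qed.

Lemma pi_conn z z' v : path_induced E W -> z \in W -> z' \in W ->
  connect E z v -> connect E v z' -> v \in W.
Proof.
move=> hpi hz hz' /connectP [p1 hp1 ->] /connectP [p2 hp2 hl2].
have := hpi z (p1 ++ p2) hz; rewrite last_cat -hl2 cat_path hp1 hp2 => /(_ hz' erefl).
move/allP; apply; by rewrite -cat_cons mem_cat mem_last.
Qed.

Lemma ab : acyclic E -> path_induced E W -> acyclic (contr_rel E W).
Proof.
move=> ac hpi u p hp hl; apply/eqP/negPn/negP => hne.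
case: (boolP (None \in u :: p)) => hN; last first.
  case: u hN hp hl => [x|] hN hp hl; last by rewrite mem_head in hN.
  have := ac (val x) (map (liftd (val x)) p) (lift_path (val x) hp hN).
  rewrite (last_map (liftd (val x)) p (Some x)) hl => /(_ erefl).
  by case: p hne {hp hl hN}.
case: u hN hp hl => [x|] hN hp hl.
  have hN' : None \in p by move: hN; rewrite in_cons.
  have [z' hz' c1] := to_None hp hN'.
  have [z hz c2] := from_None hp hl (introT orP (or_intror hN')).
  by have := pi_conn hpi hz hz' c2 c1; rewrite (negbTE (valP x)).
case: p hne hp hl {hN} => // w p' _ /= /andP [hw hp'] hl.
case: w hw hp' hl => // w' hw hp' hl.
have : None \in Some w' :: p' by rewrite -hl mem_last.
rewrite in_cons /= => hN.
have [z' hz' c1] := to_None hp' hN.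
case/existsP: hw => z /andP [hz ezw].
by have := pi_conn hpi hz hz' (connect1 ezw) c1; rewrite (negbTE (valP w')).
Qed.

Definition cv (t : T) : CV := insub t.

Lemma cv_edge s t : E s t -> connect (contr_rel E W) (cv s) (cv t).
Proof.
move=> est; rewrite /cv.
case: (boolP (s \in W)) => hs; case: (boolP (t \in W)) => ht.
- by rewrite !insubF ?hs ?ht.
- rewrite insubF ?hs // (insubT (fun x => x \notin W) ht); apply: connect1 => /=.
  by apply/existsP; exists s; rewrite hs est.
- rewrite (insubT (fun x => x \notin W) hs) insubF ?ht //; apply: connect1 => /=.
  by apply/existsP; exists t; rewrite ht est.
- rewrite (insubT (fun x => x \notin W) ht) (insubT (fun x => x \notin W) hs).
  by apply: connect1.
Qed.

Lemma cv_conn s t : connect E s t -> connect (contr_rel E W) (cv s) (cv t).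
Proof.
move=> /connectP [p hp ->]; elim: p s hp => [|y p IH] s /=; first by rewrite connect0.
by case/andP => h1 h2; apply: connect_trans (cv_edge h1) (IH _ h2).
Qed.

Lemma ba : acyclic (contr_rel E W) -> path_induced E W.
Proof.
move=> acc x p hx hl hp; apply/allP => t ht; apply/negPn/negP => htW0; have htW : t \notin W := htW0.
move: ht; rewrite in_cons => /orP [/eqP htx|ht]; first by rewrite htx hx in htW.
move: hp hl; case/splitPr: ht => p1 p2.
rewrite cat_path last_cat /= => /andP [hp1 /andP [ht hp2]] hl.
have c1 : connect E x t.
  apply/connectP; exists (rcons p1 t); last by rewrite last_rcons.
  by rewrite rcons_path hp1 ht.
have c2 : connect E t (last t p2) by apply/connectP; exists p2.
have := cv_conn c1; have := cv_conn c2.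
rewrite /cv (insubT (fun x => x \notin W) htW) !insubF ?hx ?hl //.
move=> /connectP [q2 hq2 hl2] /connectP [q1 hq1 hl1].
have := acc None (q1 ++ q2); rewrite cat_path hq1 -hl1 hq2 last_cat -hl1 -hl2.
move=> /(_ erefl erefl); by case: q1 hq1 hl1.
Qed.

Definition gexp (si : seq IV) (sc : seq CV) : seq T :=
  flatten (map (fun v => if v is Some x then [:: val x] else map val si) sc).
Definition projW (s : seq T) : seq IV := pmap insub s.
Definition contrs (s : seq T) : seq CV :=
  let k := find (mem W) s in
  map Some (pmap insub (take k s) : seq OV) ++ None :: map Some (pmap insub (drop k s) : seq OV).

Lemma flatten_single (X Y : Type) (f : X -> Y) s : flatten (map (fun x => [:: f x]) s) = map f s.
Proof. by elim: s => //= x s ->. Qed.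

Lemma gexp_cshape si a b : gexp si (cshape a b) = build a si b.
Proof.
rewrite /gexp /cshape map_cat flatten_cat /= -!map_comp.
by rewrite !(flatten_single (fun x : OV => val x)).
Qed.

Lemma pmap_none (X : Type) (P : pred X) (sT : subType P) (s : seq X) :
  all (fun x => ~~ P x) s -> pmap (insub : X -> option sT) s = [::].
Proof. by elim: s => //= x s IH /andP [hx /IH]; rewrite insubN. Qed.

Lemma f_build a si b : si != [::] ->
  projW (build a si b) = si /\ contrs (build a si b) = cshape a b.
Proof.
move=> hne; split.
  rewrite /projW /build !pmap_cat (map_pK valK).
  rewrite (@pmap_none _ _ IV (map val a)); last by apply/allP => u /memA.
  rewrite (@pmap_none _ _ IV (map val b)) ?cats0 //; by apply/allP => u /memA.
case: si hne => // z si _.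
rewrite /contrs /build find_cat.
have -> : has (mem W) (map val a) = false.
  by apply/hasPn => u /memA.
rewrite /= (valP z) addn0 size_map take_size_cat ?size_map // drop_size_cat ?size_map //.
rewrite (map_pK valK) /cshape; congr (_ ++ None :: _).
rewrite (pmap_cat _ [:: val z & map val si]) pmap_none /=; first by rewrite (map_pK valK).
rewrite negbK (valP z) /=; apply/allP => u /memI; by rewrite negbK.
Qed.

Lemma noNone (X : eqType) (p : seq (option X)) : None \notin p -> exists a, p = map Some a.
Proof.
elim: p => [|[x|] p IH]; first by exists [::].
  by rewrite in_cons negb_or => /andP [_ /IH [a ->]]; exists (x :: a).
by rewrite in_cons eqxx.
Qed.

Lemma split_cshape sc : topsort (contr_rel E W) sc -> exists a b, sc = cshape a b.
Proof.
case=> /perm_enumP [hu hm] _.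
move: hu; case/splitPr: (hm None) => p1 p2.
rewrite cat_uniq /= => /and4P [_ hh hn _].
have hn1 : None \notin p1.
  by apply/negP => h1; move: hh; rewrite negb_or => /andP [/negP []].
have [a ->] := noNone hn1; have [b ->] := noNone hn.
by exists a, b.
Qed.

Lemma si_ne (hW : W != set0) si : topsort (induced_rel E W) si -> si != [::].
Proof.
case/set0Pn: hW => w hw; case=> /perm_enumP [_ hm] _.
by have := hm (Sub w hw); case: si {hm}.
Qed.

Lemma fwf (hW : W != set0) s : topsort E s /\ consecutive W s ->
  topsort (induced_rel E W) (projW s, contrs s).1 /\
  topsort (contr_rel E W) (projW s, contrs s).2.
Proof.
case=> ts hc; have [hu _] := (perm_enumP s).1 ts.1.
have [a [si [b e]]] := decomp hu hc; subst s.
have [t1 t2] := comps ts.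
by have [-> ->] := f_build a b (si_ne hW t1).
Qed.

Lemma gwf (p : seq IV * seq CV) :
  topsort (induced_rel E W) p.1 /\ topsort (contr_rel E W) p.2 ->
  topsort E (gexp p.1 p.2) /\ consecutive W (gexp p.1 p.2).
Proof.
case: p => si sc /= [t1 t2]; have [a [b e]] := split_cshape t2; subst sc.
rewrite /= gexp_cshape; exact: wf_build.
Qed.

Lemma gf (hW : W != set0) s : topsort E s -> consecutive W s -> gexp (projW s) (contrs s) = s.
Proof.
move=> ts hc; have [hu _] := (perm_enumP s).1 ts.1.
have [a [si [b e]]] := decomp hu hc; subst s.
have [t1 t2] := comps ts.
by have [-> ->] := f_build a b (si_ne hW t1); rewrite gexp_cshape.
Qed.

Lemma fg (hW : W != set0) si sc : topsort (induced_rel E W) si -> topsort (contr_rel E W) sc ->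
  (projW (gexp si sc), contrs (gexp si sc)) = (si, sc).
Proof.
move=> t1 t2; have [a [b e]] := split_cshape t2; subst sc.
by rewrite gexp_cshape; have [-> ->] := f_build a b (si_ne hW t1).
Qed.

Lemma acycI : acyclic E -> acyclic (induced_rel E W).
Proof.
move=> ac x p hp hl.
have hp' : path E (val x) (map val p).
  by elim: p x hp {hl} => //= y p IH x /andP [h1 h2]; apply/andP; split; [exact: h1 | exact: IH].
have := ac _ _ hp'; rewrite (last_map val p x) hl => /(_ erefl).
by case: p {hp hl hp'}.
Qed.
End S.

Lemma sig_eq (A : Type) (P : A -> Prop) (x y : {a | P a}) :
  proj1_sig x = proj1_sig y -> x = y.
Proof.
case: x => x hx; case: y => y hy /= e; subst y.
by rewrite (proof_irrelevance _ hx hy).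
Qed.

Theorem lemma3p20 (T : finType) (E : rel T) (W : {set T}) :
  acyclic E -> weakly_connected_induced E W ->
  (path_induced E W <-> acyclic (contr_rel E W)) /\
  (acyclic (contr_rel E W) <-> exists s, topsort E s /\ consecutive W s) /\
  (path_induced E W ->
   exists f : {s : seq T | topsort E s /\ consecutive W s} ->
              {p : seq (induced_vtx W) * seq (contr_vtx W) |
                 topsort (induced_rel E W) p.1 /\ topsort (contr_rel E W) p.2},
     bijective f).
Proof.
move=> ac [hW _].
have acI := @acycI T E W ac.
split; first by split; [exact: ab ac | exact: ba].
split.
  split.
    move=> acc; have [si tsi] := topsort_exists acI; have [sc tsc] := topsort_exists acc.
    have [a [b e]] := split_cshape tsc; subst sc.
    by exists (build a si b); apply: wf_build.
  case=> s [ts hc]; have [hu _] := (perm_enumP s).1 ts.1.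
  have [a [si [b e]]] := decomp hu hc; subst s.
  have [_ t2] := comps ts; exact: topsort_acyclic t2.
move=> _.
exists (fun s => exist _ (projW W (proj1_sig s), contrs W (proj1_sig s)) (fwf hW (proj2_sig s))).
exists (fun p => exist _ (gexp (proj1_sig p).1 (proj1_sig p).2) (gwf (proj2_sig p))).
  by move=> [s [ts hc]]; apply: sig_eq => /=; exact: (gf hW ts hc).
by move=> [[si sc] [t1 t2]]; apply: sig_eq => /=; exact: (fg hW t1 t2).
Qed.
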